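(* Let $X$ and $Y$ be nontrivial real Banach spaces. (a) If $X$ is weakly octahedral, then $X\oplus_1 Y$ is weakly octahedral. (b) If $X$ and $Y$ are weakly octahedral and $1<p\leq\infty$, then $X\oplus_p Y$ is weakly octahedral. (c) If $X\oplus_p Y$ is weakly octahedral, where $1<p\leq\infty$, then $X$ is weakly octahedral.
   Context: For $1\le p<\infty$, $X\oplus_p Y$ is $X\times Y$ with norm $(\|x\|^p+\|y\|^p)^{1/p}$; $X\oplus_\infty Y$ has norm $\max\{\|x\|,\|y\|\}$. A Banach space $Z$ is weakly octahedral if for every finite-dimensional subspace $E$ of $Z$, every $z^*\in B_{Z^*}$, and every $\varepsilon>0$, there is a $w\in S_Z$ (unit sphere) such that $\|z+w\|\geq(1-\varepsilon)(|z^*(z)|+\|w\|)$ for all $z\in E$. *)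

(* Defs.v *)
From HB Require Import structures.
From mathcomp Require Import all_boot all_order all_algebra.
From mathcomp Require Import all_classical all_reals all_analysis.
Set Implicit Arguments. Unset Strict Implicit. Unset Printing Implicit Defensive.
Import Order.TTheory GRing.Theory Num.Theory.
Import numFieldNormedType.Exports.
Local Open Scope classical_set_scope.
Local Open Scope ring_scope.

(* Weak octahedrality is stated for a real vector space V equipped with a
   norm function N (so that it applies both to a Banach space with its own
   norm and to X x Y with the p-sum norm). *)

Section WOH.
Variables (R : realType) (V : lmodType R).

Definition linear_functional (f : V -> R) : Prop :=
  forall (a : R) (u v : V), f (a *: u + v) = a * f u + f v.

(* f in the closed unit ball of the dual of (V, N): f linear with
   |f v| <= N v for all v (this is exactly ||f|| <= 1, and implies continuity) *)
Definition dual_ball (N : V -> R) (f : V -> R) : Prop :=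
  linear_functional f /\ forall v : V, `|f v| <= N v.

Definition span_seq (s : seq V) : set V :=
  [set z | exists c : 'I_(size s) -> R, z = \sum_(i < size s) c i *: s`_i].

Definition fin_dim_subspace (E : set V) : Prop := exists s : seq V, E = span_seq s.

Definition weakly_octahedral_wrt (N : V -> R) : Prop :=
  forall E : set V, fin_dim_subspace E ->
  forall f : V -> R, dual_ball N f ->
  forall eps : R, 0 < eps ->
  exists w : V, N w = 1 /\
    forall z, E z -> (1 - eps) * (`|f z| + N w) <= N (z + w).
End WOH.

Definition weakly_octahedral (R : realType) (Z : normedModType R) : Prop :=
  @weakly_octahedral_wrt R Z (fun z => `|z|).

Definition psum_norm (R : realType) (X Y : normedModType R) (p : \bar R)
  (v : X * Y) : R :=
  match p with
  | +oo%E => Num.max `|v.1| `|v.2|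
  | r%:E => powR (powR `|v.1| r + powR `|v.2| r) r^-1
  | -oo%E => 0
  end.

Definition nontrivial (R : realType) (X : normedModType R) : Prop :=
  exists x : X, x != 0.

(* Main.v *)
Require Import Defs.
From HB Require Import structures.
From mathcomp Require Import all_boot all_order all_algebra.
From mathcomp Require Import all_classical all_reals all_analysis.
From mathcomp Require Import ring lra.
Import Order.TTheory GRing.Theory Num.Theory.
Import numFieldNormedType.Exports.
Local Open Scope ring_scope.
Section S.
Variable R : realType.

Lemma ssP (V : lmodType R) (s : seq V) z :
  span_seq s z <-> exists c : nat -> R, z = \sum_(i < size s) c i *: s`_i.
Proof.
split=> [[c ->]|[c ->]]; last by exists (fun i => c i).
exists (fun k => oapp c 0 (insub k)).
by apply: eq_bigr => i _; rewrite valK.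
Qed.

Lemma lin0 (V W : lmodType R) (g : V -> W) :
  (forall a u v, g (a *: u + v) = a *: g u + g v) -> g 0 = 0.
Proof.
move=> gl; have := gl 1 0 0; rewrite !scale1r addr0 => h.
by apply: (addrI (g 0)); rewrite addr0 -h.
Qed.

Lemma ss_lin (V W : lmodType R) (g : V -> W) (s : seq V) z :
  (forall a u v, g (a *: u + v) = a *: g u + g v) ->
  span_seq s z -> span_seq (map g s) (g z).
Proof.
move=> gl /ssP [c ->]; apply/ssP; exists c.
have gD : forall x y, g (x + y) = g x + g y.
  by move=> x y; have := gl 1 x y; rewrite !scale1r.
rewrite (big_morph g gD (lin0 _ _ _ gl)) size_map; apply: eq_bigr => i _.
rewrite (nth_map 0) // -[c i *: g _]addr0 -(lin0 _ _ _ gl) -gl addr0 //.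
Qed.

Lemma ss_scale (V : lmodType R) (s : seq V) z a :
  span_seq s z -> span_seq s (a *: z).
Proof.
move=> /ssP [c ->]; apply/ssP; exists (fun i => a * c i).
by rewrite scaler_sumr; apply: eq_bigr => i _; rewrite scalerA.
Qed.

Lemma ss_cons (V : lmodType R) (s : seq V) z a x :
  span_seq s z -> span_seq (x :: s) (a *: x + z).
Proof.
move=> /ssP [c ->]; apply/ssP; exists (fun i => if i is k.+1 then c k else a).
by rewrite /= big_ord_recl /=.
Qed.

Lemma ss0 (V : lmodType R) (s : seq V) : span_seq s 0.
Proof. by exists (fun=> 0); rewrite big1 // => i _; rewrite scale0r. Qed.

Variables X Y : normedModType R.
Lemma fst_lin : forall a (u v : X * Y), (a *: u + v).1 = a *: u.1 + v.1.
Proof. by []. Qed.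
Lemma snd_lin : forall a (u v : X * Y), (a *: u + v).2 = a *: u.2 + v.2.
Proof. by []. Qed.
Lemma inl_lin : forall a (u v : X), ((a *: u + v, 0) : X * Y) = a *: (u, 0) + (v, 0).
Proof. by move=> a u v; congr pair; rewrite /= scaler0 addr0. Qed.
Lemma inr_lin : forall a (u v : Y), ((0, a *: u + v) : X * Y) = a *: (0, u) + (0, v).
Proof. by move=> a u v; congr pair; rewrite /= scaler0 addr0. Qed.
Lemma pair_split (z : X * Y) : z = (z.1, 0) + (0, z.2).
Proof. by case: z => a b; congr pair; rewrite /= ?addr0 ?add0r. Qed.
End S.

Section LF.
Variables (R : realType) (V : lmodType R).
Lemma lf0 (f : V -> R) : linear_functional f -> f 0 = 0.
Proof.
move=> fl; have := fl 1 0 0; rewrite mul1r scale1r addr0 => h.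
by apply: (addrI (f 0)); rewrite addr0 -h.
Qed.

Lemma lfZ (f : V -> R) a u : linear_functional f -> f (a *: u) = a * f u.
Proof. by move=> fl; rewrite -[a *: u]addr0 fl lf0 // addr0. Qed.

Lemma lfD (f : V -> R) u v : linear_functional f -> f (u + v) = f u + f v.
Proof. by move=> fl; rewrite -[u]scale1r fl mul1r scale1r. Qed.

Lemma lfN (f : V -> R) u : linear_functional f -> f (- u) = - f u.
Proof. by move=> fl; rewrite -scaleN1r lfZ // mulN1r. Qed.

End LF.

Local Open Scope classical_set_scope.
Section HBsec.
Variables (R : realType) (V : normedModType R) (x0 : V).
Hypothesis x0n0 : x0 != 0.

Definition Pg (G : set (V * R)) : Prop :=
  [/\ (forall x a b, G (x, a) -> G (x, b) -> a = b),
      (forall k x y a b, G (x, a) -> G (y, b) -> G (k *: x + y, k * a + b)),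
      (forall x a, G (x, a) -> a <= `|x|) &
      (G !=set0 -> G (x0, `|x0|))].

Lemma Pg_chain (F : set (set (V * R))) :
  F `<=` Pg -> total_on F subset -> Pg (\bigcup_(G in F) G).
Proof.
move=> FP tot; split.
- move=> x a b [G1 F1 h1] [G2 F2 h2].
  have [s12|s21] := tot _ _ F1 F2.
  + by have [fn _ _ _] := FP _ F2; apply: fn (s12 _ h1) h2.
  + by have [fn _ _ _] := FP _ F1; apply: fn h1 (s21 _ h2).
- move=> k x y a b [G1 F1 h1] [G2 F2 h2].
  have [s12|s21] := tot _ _ F1 F2.
  + by have [_ ln _ _] := FP _ F2; exists G2 => //; apply: ln (s12 _ h1) h2.
  + by have [_ ln _ _] := FP _ F1; exists G1 => //; apply: ln h1 (s21 _ h2).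
- by move=> x a [G1 F1 h1]; have [_ _ dm _] := FP _ F1; apply: dm h1.
- move=> [[y b] [G1 F1 h1]]; have [_ _ _ ne] := FP _ F1.
  by exists G1 => //; apply: ne; exists (y, b).
Qed.

Lemma Pg_line : Pg [set p | exists t, p = (t *: x0, t * `|x0|)].
Proof.
split.
- move=> x a b [t [-> ->]] [t' [e ->]].
  have : (t - t') *: x0 = 0 by rewrite scalerBl e subrr.
  move/eqP; rewrite scaler_eq0 (negbTE x0n0) orbF subr_eq0 => /eqP ->.
  by [].
- move=> k x y a b [t [-> ->]] [t' [-> ->]]; exists (k * t + t').
  by rewrite scalerDl scalerA mulrDl mulrA.
- move=> x a [t [-> ->]]; rewrite normrZ.
  by apply: ler_wpM2r => //; apply: ler_norm.
- by move=> _; exists 1; rewrite scale1r mul1r.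
Qed.

Lemma Pg_ext (A : set (V * R)) (x : V) :
  Pg A -> A (x0, `|x0|) -> ~ (exists a, A (x, a)) ->
  exists B, Pg B /\ A `<` B.
Proof.
move=> [fn ln dm ne] Ax0 nx.
have A00 : A (0, 0).
  by have := ln (-1) _ _ _ _ Ax0 Ax0; rewrite scaleN1r mulN1r !addNr.
have Asc k y a : A (y, a) -> A (k *: y, k * a).
  by move=> h; have := ln k _ _ _ _ h A00; rewrite !addr0.
pose S := [set r | exists y a, A (y, a) /\ r = a - `|y - x|].
have key y a y' a' : A (y, a) -> A (y', a') -> a - `|y - x| <= `|y' + x| - a'.
  move=> h h'; rewrite lerBrDr addrAC lerBlDr.
  have := dm _ _ (ln 1 _ _ _ _ h h'); rewrite scale1r mul1r => le1.
  have e : y + y' = (y - x) + (y' + x) by rewrite addrACA addNr addr0.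
  apply: (le_trans le1); rewrite e.
  by apply: (le_trans (ler_normD _ _)); rewrite addrC.
have S0 : S !=set0 by exists (0 - `|0 - x|), 0, 0.
have Sub : ubound S (`|0 + x| - 0).
  by move=> r [y [a [h ->]]]; apply: key h A00.
have hS : has_sup S by split => //; exists (`|0 + x| - 0).
set c := sup S.
have cL y a : A (y, a) -> a - `|y - x| <= c.
  by move=> h; apply: sup_upper_bound => //; exists y, a.
have cU y a : A (y, a) -> c <= `|y + x| - a.
  by move=> h; apply: ge_sup => // r [y1 [a1 [h1 ->]]]; apply: key h1 h.
pose B := [set p | exists y a t, A (y, a) /\ p = (y + t *: x, a + t * c)].
exists B; split; last first.
  split.
  - move=> [y a] h; exists y, a, 0; split => //.
    by rewrite scale0r mul0r !addr0.
  - move=> sub; apply: nx; exists c.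
    apply: (sub (x, c)); exists 0, 0, 1; split; first exact: A00.
    by rewrite scale1r mul1r !add0r.
split.
- move=> z a b [y1 [a1 [t1 [h1 [e1 ->]]]]] [y2 [a2 [t2 [h2 [e2 ->]]]]].
  have [tt|tn] := eqVneq t1 t2.
    subst t2; move: e2; rewrite e1 => /addIr ey; subst y2.
    by rewrite (fn _ _ _ h1 h2).
  exfalso; apply: nx.
  have ex : x = (t1 - t2)^-1 *: (y2 - y1).
    apply: (scalerI (a:=t1 - t2)); first by rewrite subr_eq0.
    rewrite scalerA mulfV ?subr_eq0 // scale1r scalerBl.
    by rewrite -[y2](addrK (t2 *: x)) -e2 e1 addrAC [y1 + _]addrC addrK.
  exists ((t1 - t2)^-1 * (a2 - a1)); rewrite ex.
  apply: Asc; have := ln (-1) _ _ _ _ h1 h2.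
  by rewrite scaleN1r mulN1r addrC [- a1 + _]addrC.
- move=> k z w a b [y1 [a1 [t1 [h1 [-> ->]]]]] [y2 [a2 [t2 [h2 [-> ->]]]]].
  exists (k *: y1 + y2), (k * a1 + a2), (k * t1 + t2); split; first by apply: ln.
  congr pair.
    by rewrite scalerDr scalerA scalerDl addrACA.
  by rewrite mulrDr mulrA mulrDl addrACA.
- move=> z r [y [a [t [h [-> ->]]]]].
  have [t0|tn] := eqVneq t 0.
    by rewrite t0 scale0r mul0r !addr0; apply: dm h.
  have [tp|tneg] := ltP 0 t.
    have := cU _ _ (Asc t^-1 _ _ h).
    rewrite lerBrDr -(ler_pM2l tp) mulrDr mulrA mulfV ?mul1r ?gt_eqF //.
    rewrite -[X in X * `|_|](gtr0_norm tp) -normrZ scalerDr scalerA mulfV ?gt_eqF //.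
    by rewrite scale1r addrC.
  have tlt : t < 0 by rewrite lt_neqAle tn.
  have sp : 0 < - t by rewrite oppr_gt0.
  have := cL _ _ (Asc (- t)^-1 _ _ h).
  rewrite lerBlDr -(ler_pM2l sp) mulrDr mulrA mulfV ?mul1r ?gt_eqF //.
  rewrite -[X in X * `|_|](gtr0_norm sp) -normrZ scalerBr scalerA mulfV ?gt_eqF //.
  rewrite scale1r scaleNr opprK mulNr => hh.
  by rewrite -lerBrDr addrC.
- by move=> _; exists x0, `|x0|, 0; rewrite scale0r mul0r !addr0.
Qed.

Lemma hb_exists : exists g : V -> R,
  linear_functional g /\ (forall v, `|g v| <= `|v|) /\ g x0 = `|x0|.
Proof.
have [A [PA maxA]] := Zorn_bigcup Pg_chain.
have [fn ln dm ne] := PA.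
have Ax0 : A (x0, `|x0|).
  apply: ne; apply: contrapT => A0.
  have Ae : A = set0 by apply/seteqP; split => // p Ap; apply: A0; exists p.
  apply: (maxA _ _ Pg_line); rewrite Ae; split => // sub.
  by have := sub (1 *: x0, 1 * `|x0|) (ex_intro _ 1 erefl).
have tot : forall v, exists a, A (v, a).
  move=> v; apply: contrapT => nv.
  have [B [PB AB]] := @Pg_ext _ _ PA Ax0 nv.
  exact: maxA _ AB PB.
have [g hg] := choice tot.
exists g; split; [|split].
- move=> k u v; apply: fn (hg _) _; apply: ln; exact: hg.
- move=> v; rewrite ler_norml; apply/andP; split; last exact: dm (hg v).
  have A00 : A (0, 0).
    by have := ln (-1) _ _ _ _ Ax0 Ax0; rewrite scaleN1r mulN1r !addNr.
  have := dm _ _ (ln (-1) _ _ _ _ (hg v) A00).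
  by rewrite !addr0 scaleN1r mulN1r normrN lerNl.
- exact: fn (hg x0) Ax0.
Qed.
End HBsec.

Section OPN.
Variables (R : realType) (V : normedModType R).

Definition opn (f : V -> R) := sup [set r | exists x : V, `|x| <= 1 /\ r = `|f x|].

Section F.
Variable f : V -> R.
Hypothesis fl : linear_functional f.
Hypothesis fb : forall v, `|f v| <= `|v|.

Let S := [set r | exists x : V, `|x| <= 1 /\ r = `|f x|].
Let S0 : S !=set0. Proof. by exists `|f 0|, 0; rewrite normr0. Qed.
Let Sub : ubound S 1.
Proof. by move=> r [x [x1 ->]]; apply: le_trans (fb x) x1. Qed.
Let hS : has_sup S. Proof. by split => //; exists 1. Qed.

Lemma opn_le1 : opn f <= 1.
Proof. exact: ge_sup. Qed.

Lemma opn_ge0 : 0 <= opn f.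
Proof.
apply: le_trans (sup_upper_bound hS _); last by exists 0; rewrite normr0.
by [].
Qed.

Lemma opn_ub x : `|f x| <= opn f * `|x|.
Proof.
have [->|xn0] := eqVneq x 0.
  by rewrite lf0 // normr0 normr0 mulr0.
have xp : 0 < `|x| by rewrite normr_gt0.
have h : S `|f (`|x|^-1 *: x)|.
  exists (`|x|^-1 *: x); split => //.
  by rewrite normrZ normfV normr_id mulVf ?gt_eqF.
have := sup_upper_bound hS h; rewrite lfZ // normrM normfV normr_id.
by rewrite ler_pdivrMl // mulrC.
Qed.

Lemma opn_adh d : 0 < d -> exists x, `|x| <= 1 /\ opn f - d < f x.
Proof.
move=> d0; have [r [x [x1 ->]] h] := sup_adherent d0 hS.
have [fp|fn] := leP 0 (f x).
  by exists x; split => //; rewrite -(ger0_norm fp).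
exists (- x); split; first by rewrite normrN.
by rewrite (@lfN _ _ f x fl) -(ltr0_norm fn).
Qed.
End F.
End OPN.

Local Close Scope classical_set_scope.
Section NR.
Variable R : realType.
Implicit Types r s t a b x y : R.

Lemma powR_le {r x y} : 0 <= r -> 0 <= x -> x <= y -> x `^ r <= y `^ r.
Proof.
move=> r0 x0 xy; apply: (ge0_ler_powR r0) => //; rewrite nnegrE //.
exact: le_trans xy.
Qed.

Lemma powRK x r : 0 <= x -> 0 < r -> (x `^ r) `^ r^-1 = x.
Proof. by move=> x0 r0; rewrite -powRrM mulfV ?gt_eqF // powRr1. Qed.

Lemma powRVK x r : 0 <= x -> 0 < r -> (x `^ r^-1) `^ r = x.
Proof. by move=> x0 r0; rewrite -powRrM mulVf ?gt_eqF // powRr1. Qed.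

Definition nr r s t := (s `^ r + t `^ r) `^ r^-1.

Lemma nr_ge0 r s t : 0 <= nr r s t.
Proof. exact: powR_ge0. Qed.

Lemma nr_pow r s t : 0 < r -> nr r s t `^ r = s `^ r + t `^ r.
Proof. by move=> r0; rewrite powRVK // addr_ge0 // powR_ge0. Qed.

Lemma nr_s0 r s : 0 < r -> 0 <= s -> nr r s 0 = s.
Proof. by move=> r0 s0; rewrite /nr powR0 ?gt_eqF // addr0 powRK. Qed.

Lemma nr_0t r t : 0 < r -> 0 <= t -> nr r 0 t = t.
Proof. by move=> r0 s0; rewrite /nr powR0 ?gt_eqF // add0r powRK. Qed.

Lemma nr_mono r s t s' t' : 0 < r -> 0 <= s -> 0 <= t -> s <= s' -> t <= t' ->
  nr r s t <= nr r s' t'.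
Proof.
move=> r0 s0 t0 ss tt; apply: powR_le; first by rewrite invr_ge0 ltW.
  by rewrite addr_ge0 // powR_ge0.
by apply: lerD; apply: powR_le => //; apply: ltW.
Qed.

Lemma nr_gel r s t : 0 < r -> 0 <= s -> 0 <= t -> s <= nr r s t.
Proof.
move=> r0 s0 t0; rewrite -{1}(nr_s0 _ _ r0 s0); exact: nr_mono.
Qed.

Lemma nr_ger r s t : 0 < r -> 0 <= s -> 0 <= t -> t <= nr r s t.
Proof.
move=> r0 s0 t0; rewrite -{1}(nr_0t _ _ r0 t0); exact: nr_mono.
Qed.

Lemma nr_homo r c s t : 0 < r -> 0 <= c -> 0 <= s -> 0 <= t ->
  nr r (c * s) (c * t) = c * nr r s t.
Proof.
move=> r0 c0 s0 t0; rewrite /nr !powRM // -mulrDr powRM ?powR_ge0 //.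
  by rewrite powRK.
by rewrite addr_ge0 // powR_ge0.
Qed.

Lemma le1_powR s r : 0 <= s <= 1 -> 1 <= r -> s `^ r <= s.
Proof.
move=> /andP[s0 s1] r1; have [->|sn0] := eqVneq s 0.
  by rewrite powR0 // gt_eqF // (lt_le_trans ltr01).
by apply: ge1r_powR => //; rewrite lt_neqAle eq_sym sn0 s0.
Qed.

Lemma nr_le_add r s t : 1 <= r -> 0 <= s -> 0 <= t -> nr r s t <= s + t.
Proof.
move=> r1 s0 t0; have r0 : 0 < r by apply: lt_le_trans r1.
have [m0|mn0] := eqVneq (s + t) 0.
  have [-> ->] : s = 0 /\ t = 0.
    by move/eqP: m0; rewrite paddr_eq0 // => /andP[/eqP -> /eqP ->].
  by rewrite nr_s0 // addr0.
have mp : 0 < s + t by rewrite lt_neqAle eq_sym mn0 addr_ge0.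
have es : s = (s + t) * (s / (s + t)) by rewrite mulrCA mulfV // mulr1.
have et : t = (s + t) * (t / (s + t)) by rewrite mulrCA mulfV // mulr1.
have m0 := ltW mp.
rewrite [X in nr r X _]es [X in nr r _ X]et nr_homo ?divr_ge0 //.
rewrite -[X in _ <= X]mulr1 ler_wpM2l //.
rewrite /nr; apply: (@le_trans _ _ (1 `^ r^-1)); last by rewrite powR1.
apply: powR_le; first by rewrite invr_ge0 ltW.
  by rewrite addr_ge0 // powR_ge0.
have -> : 1 = s / (s + t) + t / (s + t) by rewrite -mulrDl mulfV.
apply: lerD; apply: le1_powR => //; rewrite divr_ge0 //=;
  by rewrite ler_pdivrMr // mul1r ?lerDl ?lerDr.
Qed.

Lemma conj_inv r : 1 < r -> r^-1 + (r / (r - 1))^-1 = 1.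
Proof.
move=> r1; have h1 : r != 0 by lra.
have h2 : r - 1 != 0 by lra.
field; exact/andP.
Qed.

Lemma nr_holder r s t a b : 1 < r -> 0 <= s -> 0 <= t -> 0 <= a -> 0 <= b ->
  a * s + b * t <= nr r s t * nr (r / (r - 1)) a b.
Proof.
move=> r1 s0 t0 a0 b0; rewrite [a * s]mulrC [b * t]mulrC.
apply: hoelder2 => //; first by lra.
  by apply: divr_gt0; lra.
exact: conj_inv.
Qed.

Lemma nr_conv r s t : 1 < r -> 0 <= s -> 0 <= t ->
  (s + t) `^ r <= 2 `^ (r - 1) * (s `^ r + t `^ r).
Proof.
move=> r1 s0 t0; have r0 : 0 < r by lra.
have := @nr_holder r s t 1 1 r1 s0 t0 ler01 ler01; rewrite !mul1r => h.
have := powR_le (ltW r0) (addr_ge0 s0 t0) h.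
rewrite powRM ?nr_ge0 ?powR_ge0 // nr_pow // /nr powR1 -powRrM.
suff -> : (r / (r - 1))^-1 * r = r - 1 by rewrite mulrC.
have h1 : r != 0 by lra.
have h2 : r - 1 != 0 by lra.
field; exact/andP.
Qed.
End NR.

Arguments ssP {R V s z}.
Arguments lin0 {R V W g}.
Arguments ss_lin {R V W g s z}.
Arguments ss_scale {R V s z}.
Arguments ss_cons {R V s z}.
Arguments ss0 {R V}.
Arguments fst_lin {R X Y}.
Arguments snd_lin {R X Y}.
Arguments inl_lin {R X Y}.
Arguments inr_lin {R X Y}.
Arguments pair_split {R X Y}.
Arguments lf0 {R V f}.
Arguments lfZ {R V f}.
Arguments lfD {R V f}.
Arguments lfN {R V f}.
Arguments opn_le1 {R V f}.
Arguments opn_ge0 {R V f}.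
Arguments opn_ub {R V f}.
Arguments opn_adh {R V f}.
Arguments hb_exists {R V x0}.
Arguments powRK {R}.
Arguments powRVK {R}.
Arguments nr {R}.
Arguments nr_ge0 {R}.
Arguments nr_pow {R}.
Arguments nr_s0 {R}.
Arguments nr_0t {R}.
Arguments nr_mono {R}.
Arguments nr_gel {R}.
Arguments nr_ger {R}.
Arguments nr_homo {R}.
Arguments le1_powR {R}.
Arguments nr_le_add {R}.
Arguments conj_inv {R}.
Arguments nr_holder {R}.
Arguments nr_conv {R}.
Arguments opn {R V}.


Section PA.
Variable R : realType.

Lemma woh_red (V : lmodType R) (N : V -> R) : (forall v, 0 <= N v) ->
  (forall E, fin_dim_subspace E -> forall f, dual_ball N f ->
   forall eps : R, 0 < eps -> eps < 1 ->
   exists w, N w = 1 /\ forall z, E z -> (1 - eps) * (`|f z| + N w) <= N (z + w)) ->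
  weakly_octahedral_wrt N.
Proof.
move=> N0 H E hE f hf eps e0.
pose e' := Num.min eps 2^-1.
have e'e : e' <= eps by rewrite ge_min lexx.
have e'h : e' <= 2^-1 by rewrite ge_min lexx orbT.
have e'0 : 0 < e' by rewrite lt_min e0 invr_gt0 ltr0n.
have e'1 : e' < 1 by apply: le_lt_trans e'h _; rewrite invf_lt1 ?ltr1n ?ltr0n.
have [w [w1 hw]] := H E hE f hf e' e'0 e'1.
exists w; split => // z Ez; apply: le_trans (hw z Ez).
apply: ler_wpM2r; first by rewrite addr_ge0.
by rewrite lerD2l lerN2.
Qed.

Variables X Y : normedModType R.

Lemma psum1 (v : X * Y) : psum_norm 1%:E v = `|v.1| + `|v.2|.
Proof. by rewrite /psum_norm invr1 !powRr1 // addr_ge0. Qed.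

Lemma partA : weakly_octahedral X -> weakly_octahedral_wrt (@psum_norm R X Y 1%:E).
Proof.
move=> hX; apply: woh_red => [v|E [s ->] f [fl fb] eps e0 e1].
  by rewrite psum1 addr_ge0.
pose fx x := f (x, 0).
have fxl : linear_functional fx by move=> a u v; rewrite /fx inl_lin fl.
have fxb : forall x, `|fx x| <= `|x|.
  by move=> x; have := fb (x, 0); rewrite psum1 /= normr0 addr0.
have [u [u1 hu]] := hX (span_seq (map fst s)) (ex_intro _ _ erefl) fx
  (conj fxl fxb) eps e0.
exists (u, 0); split; first by rewrite psum1 /= u1 normr0 addr0.
move=> z Ez; rewrite !psum1 /= u1 normr0 addr0 addr0.
have hz := hu z.1 (ss_lin fst_lin Ez); rewrite u1 in hz.
have fz : `|f z| <= `|fx z.1| + `|z.2|.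
  rewrite {1}(pair_split z) lfD //; apply: le_trans (ler_normD _ _) _.
  by rewrite lerD2l; have := fb (0, z.2); rewrite psum1 /= normr0 add0r.
have n2 := normr_ge0 z.2.
have n1 := normr_ge0 (fx z.1).
nra.
Qed.
End PA.


Section PB.
Variable R : realType.

Lemma woh_scale (V : normedModType R) (S : set V) (g : V -> R) (u : V) (eps alpha : R) :
  (forall x, S x -> S (alpha^-1 *: x)) -> linear_functional g ->
  (forall x, `|g x| <= `|x|) -> 0 <= eps <= 1 -> 0 <= alpha ->
  (forall x, S x -> (1 - eps) * (`|g x| + 1) <= `|x + u|) ->
  forall x, S x -> (1 - eps) * (`|g x| + alpha) <= `|x + alpha *: u|.
Proof.
move=> Sc gl gb /andP[e0 e1] a0 H x Sx.
have [->|an0] := eqVneq alpha 0.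
  rewrite scale0r !addr0; have := gb x; have := normr_ge0 (g x); nra.
have ap : 0 < alpha by rewrite lt_neqAle eq_sym an0.
have := H _ (Sc x Sx); rewrite lfZ // normrM normfV (gtr0_norm ap) => h.
have -> : x + alpha *: u = alpha *: (alpha^-1 *: x + u).
  by rewrite scalerDr scalerA mulfV // scale1r.
rewrite normrZ (gtr0_norm ap).
have -> : (1 - eps) * (`|g x| + alpha) = alpha * ((1 - eps) * (alpha^-1 * `|g x| + 1)).
  by field; rewrite an0.
by rewrite ler_pM2l.
Qed.

Variables X Y : normedModType R.

Lemma B_core (p : \bar R) (M : R -> R -> R) (a b al be : R) :
  (forall v : X * Y, psum_norm p v = M `|v.1| `|v.2|) ->
  (forall s t s' t', 0 <= s -> 0 <= t -> s <= s' -> t <= t' -> M s t <= M s' t') ->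
  (forall c s t, 0 <= c -> 0 <= s -> 0 <= t -> M (c * s) (c * t) = c * M s t) ->
  (forall s t, 0 <= s -> 0 <= t -> a * s + b * t <= M s t) ->
  M al be = 1 -> 0 <= a -> 0 <= b -> 0 <= al -> 0 <= be -> a * al + b * be = 1 ->
  weakly_octahedral X -> weakly_octahedral Y ->
  forall (s : seq (X * Y)) (f : X * Y -> R), linear_functional f ->
  (forall x, `|f (x, 0)| <= a * `|x|) -> (forall y, `|f (0, y)| <= b * `|y|) ->
  forall eps, 0 < eps -> eps < 1 ->
  exists w, psum_norm p w = 1 /\
    forall z, span_seq s z -> (1 - eps) * (`|f z| + psum_norm p w) <= psum_norm p (z + w).
Proof.
move=> hM Mmono Mhom Mhol Mab a0 b0 al0 be0 abe hX hY s f fl fa fb eps e0 e1.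
pose g x := a^-1 * f (x, 0).
have gl : linear_functional g.
  by move=> k u v; rewrite /g inl_lin fl mulrDr mulrCA.
have ga : forall x, a * `|g x| = `|f (x, 0)|.
  move=> x; have [a00|an0] := eqVneq a 0.
    by have := fa x; rewrite a00 !mul0r normr_le0 => /eqP ->; rewrite normr0.
  by rewrite /g normrM normfV (ger0_norm a0) mulrA mulfV // mul1r.
have gb : forall x, `|g x| <= `|x|.
  move=> x; have [a00|an0] := eqVneq a 0.
    by rewrite /g a00 invr0 mul0r normr0.
  have ap : 0 < a by rewrite lt_neqAle eq_sym an0.
  by rewrite -(ler_pM2l ap) ga fa.
pose h y := b^-1 * f (0, y).
have hl : linear_functional h.
  by move=> k u v; rewrite /h inr_lin fl mulrDr mulrCA.
have hb : forall y, b * `|h y| = `|f (0, y)|.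
  move=> y; have [b00|bn0] := eqVneq b 0.
    by have := fb y; rewrite b00 !mul0r normr_le0 => /eqP ->; rewrite normr0.
  by rewrite /h normrM normfV (ger0_norm b0) mulrA mulfV // mul1r.
have hbb : forall y, `|h y| <= `|y|.
  move=> y; have [b00|bn0] := eqVneq b 0.
    by rewrite /h b00 invr0 mul0r normr0.
  have bp : 0 < b by rewrite lt_neqAle eq_sym bn0.
  by rewrite -(ler_pM2l bp) hb fb.
have [u [u1 hu]] := hX (span_seq (map fst s)) (ex_intro _ _ erefl) g (conj gl gb) eps e0.
have [v [v1 hv]] := hY (span_seq (map snd s)) (ex_intro _ _ erefl) h (conj hl hbb) eps e0.
rewrite u1 in hu; rewrite v1 in hv.
have e01 : 0 <= eps <= 1 by rewrite (ltW e0) (ltW e1).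
have hu' := @woh_scale X _ g u eps al (fun x => ss_scale _) gl gb e01 al0 hu.
have hv' := @woh_scale Y _ h v eps be (fun x => ss_scale _) hl hbb e01 be0 hv.
exists (al *: u, be *: v).
have Nw : psum_norm p (al *: u, be *: v) = 1.
  by rewrite hM /= !normrZ u1 v1 !mulr1 !ger0_norm.
split => // z Ez; rewrite Nw hM /=.
have h1 := hu' _ (ss_lin fst_lin Ez).
have h2 := hv' _ (ss_lin snd_lin Ez).
have G1 := normr_ge0 (g z.1); have G2 := normr_ge0 (h z.2).
have ee : 0 <= 1 - eps by lra.
apply: le_trans (Mmono _ _ _ _ _ _ h1 h2); last 2 first.
  - by apply: mulr_ge0 => //; apply: addr_ge0.
  - by apply: mulr_ge0 => //; apply: addr_ge0.
rewrite (Mhom _ _ _ ee (addr_ge0 G1 al0) (addr_ge0 G2 be0)); apply: ler_wpM2l => //.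
apply: le_trans (Mhol _ _ _ _); last 2 first.
  - exact: addr_ge0.
  - exact: addr_ge0.
have fz : `|f z| <= a * `|g z.1| + b * `|h z.2|.
  rewrite ga hb {1}(pair_split z) lfD //; exact: ler_normD.
by rewrite mulrDr [b * (_ + _)]mulrDr addrACA abe lerD2r.
Qed.
End PB.
Arguments B_core {R X Y p M a b al be}.


Section PB2.
Variable R : realType.
Variables X Y : normedModType R.

Lemma sup_step (p : \bar R) (M : R -> R -> R) (f : X * Y -> R) :
  (forall v : X * Y, psum_norm p v = M `|v.1| `|v.2|) ->
  (forall s t s' t', 0 <= s -> 0 <= t -> s <= s' -> t <= t' -> M s t <= M s' t') ->
  (forall s, 0 <= s -> M s 0 = s) -> (forall t, 0 <= t -> M 0 t = t) ->
  dual_ball (psum_norm p) f ->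
  [/\ forall x, `|f (x, 0)| <= opn (fun x => f (x, 0)) * `|x|,
      forall y, `|f (0, y)| <= opn (fun y => f (0, y)) * `|y|,
      0 <= opn (fun x => f (x, 0)), 0 <= opn (fun y => f (0, y)) &
      forall s t, 0 <= s -> 0 <= t ->
      s * opn (fun x => f (x, 0)) + t * opn (fun y => f (0, y)) <= M s t].
Proof.
move=> hM Mmono Ms0 M0t [fl fb].
have fxl : linear_functional (fun x : X => f (x, 0)).
  by move=> k u v; rewrite inl_lin fl.
have fxb : forall x : X, `|f (x, 0)| <= `|x|.
  by move=> x; have := fb (x, 0); rewrite hM /= normr0 Ms0.
have fyl : linear_functional (fun y : Y => f (0, y)).
  by move=> k u v; rewrite inr_lin fl.
have fyb : forall y : Y, `|f (0, y)| <= `|y|.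
  by move=> y; have := fb (0, y); rewrite hM /= normr0 M0t.
split.
- exact: opn_ub fxl fxb.
- exact: opn_ub fyl fyb.
- exact: opn_ge0 fxb.
- exact: opn_ge0 fyb.
move=> s t s0 t0; apply/ler_addgt0Pr => e e0.
have st1 : 0 < s + t + 1 by rewrite ltr_wpDl // addr_ge0.
pose d := e / (s + t + 1).
have d0 : 0 < d by rewrite divr_gt0.
have [x [x1 hx]] := opn_adh fxl fxb d d0.
have [y [y1 hy]] := opn_adh fyl fyb d d0.
have ep : ((s *: x, t *: y) : X * Y) = s *: (x, 0) + t *: (0, y).
  by congr pair; rewrite /= ?scaler0 ?addr0 ?add0r.
have key : s * f (x, 0) + t * f (0, y) <= M s t.
  rewrite -!lfZ // -lfD // -ep; apply: le_trans (ler_norm _) _.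
  apply: le_trans (fb _) _; rewrite hM /= !normrZ !ger0_norm //.
  apply: Mmono; rewrite ?mulr_ge0 //.
    by rewrite -[X in _ <= X]mulr1 ler_wpM2l.
  by rewrite -[X in _ <= X]mulr1 ler_wpM2l.
have sd : (s + t) * d <= e.
  rewrite /d mulrA ler_pdivrMr // mulrC ler_pM2l // lerDl; exact: ler01.
have h1 : s * opn (fun x => f (x, 0)) <= s * f (x, 0) + s * d.
  by rewrite -mulrDr ler_wpM2l // ltW // -ltrBlDr.
have h2 : t * opn (fun y => f (0, y)) <= t * f (0, y) + t * d.
  by rewrite -mulrDr ler_wpM2l // ltW // -ltrBlDr.
rewrite mulrDl in sd.
lra.
Qed.
End PB2.
Arguments sup_step {R X Y p M f}.


Section PB3.
Variable R : realType.
Variables X Y : normedModType R.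

Lemma partB_inf : weakly_octahedral X -> weakly_octahedral Y ->
  weakly_octahedral_wrt (@psum_norm R X Y +oo%E).
Proof.
move=> hX hY.
pose M := fun s t : R => Num.max s t.
have hM : forall v : X * Y, psum_norm +oo%E v = M `|v.1| `|v.2| by [].
have Mmono : forall s t s' t', 0 <= s -> 0 <= t -> s <= s' -> t <= t' -> M s t <= M s' t'.
  by move=> s t s' t' _ _ ss tt; rewrite /M ge_max !le_max ss tt orbT.
have Ms0 : forall s, 0 <= s -> M s 0 = s by move=> s s0; rewrite /M max_l.
have M0t : forall t, 0 <= t -> M 0 t = t by move=> t t0; rewrite /M max_r.
have Mhom : forall c s t, 0 <= c -> 0 <= s -> 0 <= t -> M (c * s) (c * t) = c * M s t.
  by move=> c s t c0 _ _; rewrite /M maxr_pMr.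
apply: woh_red => [v|E [s ->] f fball eps e0 e1].
  by rewrite hM le_max normr_ge0.
have [fa fb A0 B0 key] := sup_step hM Mmono Ms0 M0t fball.
set A := opn _ in fa A0 key; set B := opn _ in fb B0 key.
have AB : A + B <= 1 by have := key 1 1 ler01 ler01; rewrite !mul1r /M maxxx.
have Mhol : forall s t, 0 <= s -> 0 <= t -> (1 - B) * s + B * t <= M s t.
  move=> s' t' s0 t0; rewrite /M.
  have h1 : s' <= Num.max s' t' by rewrite le_max lexx.
  have h2 : t' <= Num.max s' t' by rewrite le_max lexx orbT.
  have B1 : B <= 1 by lra.
  nra.
have M11 : M 1 1 = 1 by rewrite /M maxxx.
have fa' : forall x, `|f (x, 0)| <= (1 - B) * `|x|.
  move=> x; apply: le_trans (fa x) _; apply: ler_wpM2r => //; lra.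
have fb' : forall y, `|f (0, y)| <= B * `|y| by [].
have [w [w1 hw]] := B_core hM Mmono Mhom Mhol M11 ltac:(lra) B0 ler01 ler01
  ltac:(lra) hX hY s f fball.1 fa' fb' eps e0 e1.
by exists w.
Qed.
End PB3.


Section PB4.
Variable R : realType.
Variables X Y : normedModType R.

Lemma S_le1 (r A B : R) : 1 < r -> 0 <= A -> 0 <= B ->
  (forall s t, 0 <= s -> 0 <= t -> s * A + t * B <= nr r s t) ->
  A `^ (r / (r - 1)) + B `^ (r / (r - 1)) <= 1.
Proof.
move=> r1 A0 B0 key; set q := r / (r - 1).
have r0 : 0 < r by lra.
have q1 : 1 < q by rewrite /q ltr_pdivlMr ?mul1r; lra.
have q0 : 0 < q by lra.
have qr : (q - 1) * r = q.
  have h1 : r - 1 != 0 by lra.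
  by rewrite /q; field.
have := key (A `^ (q - 1)) (B `^ (q - 1)) (powR_ge0 _ _) (powR_ge0 _ _).
rewrite ![_ `^ (q - 1) * _]mulrC !mulr_powRB1 // /nr -!powRrM qr.
set S := _ + _ => h; have S0 : 0 <= S by rewrite addr_ge0 // powR_ge0.
rewrite leNgt; apply/negP => S1.
have : S `^ r <= S.
  rewrite -[X in _ <= X](powRVK S r) //.
  by apply: powR_le => //; apply: ltW.
rewrite -mulr_powRB1 // -[X in _ <= X]mulr1 ler_pM2l; last by lra.
rewrite leNgt; apply/negP/negPn.
have := @gt0_ltr_powR _ (r - 1) ltac:(lra) 1 S; rewrite powR1 => -> //; rewrite nnegrE // ltW.
Qed.

Lemma partB_fin (r : R) : 1 < r -> weakly_octahedral X -> weakly_octahedral Y ->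
  weakly_octahedral_wrt (@psum_norm R X Y r%:E).
Proof.
move=> r1 hX hY; have r0 : 0 < r by lra.
pose M := nr r.
have hM : forall v : X * Y, psum_norm r%:E v = M `|v.1| `|v.2| by [].
have Mmono : forall s t s' t', 0 <= s -> 0 <= t -> s <= s' -> t <= t' -> M s t <= M s' t'.
  by move=> *; apply: nr_mono.
have Ms0 : forall s, 0 <= s -> M s 0 = s by move=> s s0; apply: nr_s0.
have M0t : forall t, 0 <= t -> M 0 t = t by move=> t t0; apply: nr_0t.
have Mhom : forall c s t, 0 <= c -> 0 <= s -> 0 <= t -> M (c * s) (c * t) = c * M s t.
  by move=> *; apply: nr_homo.
apply: woh_red => [v|E [s ->] f fball eps e0 e1]; first exact: nr_ge0.
have [fa fb A0 B0 key] := sup_step hM Mmono Ms0 M0t fball.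
set A := opn _ in fa A0 key; set B := opn _ in fb B0 key.
have SL := @S_le1 r A B r1 A0 B0 key.
set q := r / (r - 1) in SL.
have q1 : 1 < q by rewrite /q ltr_pdivlMr ?mul1r; lra.
have q0 : 0 < q by lra.
have qr : (q - 1) * r = q.
  have h1 : r - 1 != 0 by lra.
  by rewrite /q; field.
have Aq0 : 0 <= A `^ q := powR_ge0 _ _.
have Bq0 : 0 <= B `^ q := powR_ge0 _ _.
set a := (1 - B `^ q) `^ q^-1.
have a0 : 0 <= a := powR_ge0 _ _.
have aq : a `^ q = 1 - B `^ q by rewrite /a powRVK //; lra.
have Aa : A <= a.
  rewrite -(powRK A q) // /a; apply: powR_le => //; first by rewrite invr_ge0 ltW.
  lra.
have fa' : forall x, `|f (x, 0)| <= a * `|x|.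
  by move=> x; apply: le_trans (fa x) _; apply: ler_wpM2r.
have fb' : forall y, `|f (0, y)| <= B * `|y| by [].
have nq : nr q a B = 1 by rewrite /nr aq subrK powR1.
have Mhol : forall s t, 0 <= s -> 0 <= t -> a * s + B * t <= M s t.
  move=> s' t' s0 t0; have := nr_holder r s' t' a B r1 s0 t0 a0 B0.
  by rewrite -/q nq mulr1.
have al0 : 0 <= a `^ (q - 1) := powR_ge0 _ _.
have be0 : 0 <= B `^ (q - 1) := powR_ge0 _ _.
have Mab : M (a `^ (q - 1)) (B `^ (q - 1)) = 1.
  have ar : (a `^ (q - 1)) `^ r = a `^ q by rewrite -powRrM qr.
  have br : (B `^ (q - 1)) `^ r = B `^ q by rewrite -powRrM qr.
  by rewrite /M /nr ar br aq subrK powR1.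
have abe : a * a `^ (q - 1) + B * B `^ (q - 1) = 1.
  by rewrite !mulr_powRB1 // aq subrK.
have [w [w1 hw]] := B_core hM Mmono Mhom Mhol Mab a0 B0 al0 be0 abe
  hX hY s f fball.1 fa' fb' eps e0 e1.
by exists w.
Qed.
End PB4.


Section PH.
Variable R : realType.

Lemma L_K0 (th : R) : 0 <= th -> 2 * (1 - 2 * th) <= (1 - th) * (2 - th).
Proof.
move=> t0; have tt0 : 0 <= th * th by rewrite mulr_ge0.
have e : (1 - th) * (2 - th) = 2 - 3 * th + th * th by ring.
rewrite e; lra.
Qed.

Lemma L_cv (T P K A V n th tr : R) :
  T * (1 - 2 * n * th) <= K -> K <= A + V -> A <= P * (1 + (1 - V)) ->
  P * 2 = T -> T * (2 * n * th) <= (P - 1) * tr -> (P - 1) * V <= (P - 1) * tr.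
Proof.
move=> h1 h2 h3 h4 h5.
have e1 : P * (1 + (1 - V)) = P * 2 - P * V by ring.
have e2 : T * (1 - 2 * n * th) = T - T * (2 * n * th) by ring.
have e3 : (P - 1) * V = P * V - V by ring.
rewrite e1 h4 in h3; rewrite e2 in h1; rewrite e3; lra.
Qed.

Lemma L_H2 (th G a V Y XU tau : R) :
  0 <= th -> Y <= 1 -> V <= tau ->
  (1 - th) * (G + 2 - th) <= a + V -> a <= Y + XU ->
  (1 - th) * (G + 1) - (2 * th + tau) <= XU.
Proof.
move=> t0 y1 vt h1 h2; have tt0 : 0 <= th * th by rewrite mulr_ge0.
have e : (1 - th) * (G + 2 - th) = (1 - th) * (G + 1) + 1 - 2 * th + th * th by ring.
rewrite e in h1; lra.
Qed.

Lemma L_fin (eps th tau G Xs W : R) :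
  0 <= th -> th <= eps / 12 -> tau = eps / 4 -> eps < 1 -> 0 <= G -> Xs <= G ->
  (1 - th) * (G + 1) - (2 * (2 * th + tau) + th) <= W ->
  (1 - eps) * (Xs + 1) <= W.
Proof.
move=> t0 te ta e1 G0 XG h.
have h1 : (1 - eps) * (Xs + 1) <= (1 - eps) * (G + 1).
  by rewrite ler_wpM2l ?lerD2r //; lra.
have h2 : 0 <= (eps - th) * G by rewrite mulr_ge0 //; lra.
have e1' : (1 - eps) * (G + 1) = (1 - th) * (G + 1) - (eps - th) * G - (eps - th) by ring.
rewrite e1' in h1; rewrite ta in h; lra.
Qed.
End PH.

Section PH2.
Variable R : realType.
Lemma L_th (th : R) : 0 < th -> th <= 1 / 12 ->
  [/\ 0 < 1 - 2 * th, 1 - 2 * th <= 1, 0 < 1 - th, 0 < 2 - th & th <= 1].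
Proof. move=> t0 t1; split; lra. Qed.

Lemma L_ek (th eps : R) : 0 <= th -> th <= 1 / 12 -> 0 < eps -> eps < 1 ->
  0 <= 2 * th + eps / 4 /\ 0 < 1 - th - (2 * th + eps / 4).
Proof. move=> *; split; lra. Qed.
End PH2.
Arguments L_K0 {R th}. Arguments L_cv {R T P K A V n th tr}. Arguments L_H2 {R th G a V Y XU tau}.
Arguments L_fin {R eps th tau G Xs W}. Arguments L_th {R th}. Arguments L_ek {R th eps}.


Section PC.
Variable R : realType.
Variables X Y : normedModType R.

Lemma C_norm (g : X -> R) (s : seq X) (u : X) (eta kap : R) :
  linear_functional g ->
  `|u| <= 1 -> 0 <= eta -> 0 <= kap -> 0 < 1 - eta - kap ->
  (forall x, span_seq s x -> (1 - eta) * (`|g x| + 1) - kap <= `|x + u|) ->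
  exists w : X, `|w| = 1 /\ forall x, span_seq s x ->
    (1 - eta) * (`|g x| + 1) - (2 * kap + eta) <= `|x + w|.
Proof.
move=> gl u1 e0 k0 ek H.
have um : 1 - eta - kap <= `|u|.
  by have := H 0 (ss0 _); rewrite lf0 // normr0 !add0r mulr1.
have up : 0 < `|u| by lra.
exists (`|u|^-1 *: u); split.
  by rewrite normrZ normfV normr_id mulVf ?gt_eqF.
move=> x Sx; have := H x Sx.
have e : x + u = (x + `|u|^-1 *: u) + (1 - `|u|^-1) *: u.
  by rewrite scalerBl scale1r addrACA subrr addr0.
rewrite e => h.
have := le_trans h (ler_normD _ _); rewrite normrZ.
have -> : `|1 - `|u|^-1| * `|u| = 1 - `|u|.
  rewrite ler0_norm; last first.
    by rewrite subr_le0 invf_ge1 // (le_trans u1).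
  by rewrite opprB mulrBl mulVf ?gt_eqF // mul1r.
lra.
Qed.

Lemma C_g (xs : X -> R) : nontrivial X -> dual_ball (fun z : X => `|z|) xs ->
  exists g : X -> R, [/\ linear_functional g, (forall x, `|g x| <= `|x|),
    (forall x, `|xs x| <= `|g x|) &
    (forall d, 0 < d -> exists x0, `|x0| <= 1 /\ 1 - d <= g x0)].
Proof.
move=> [x1 x1n0] [xl xb].
have [A0|Ap] := eqVneq (opn xs) 0.
  have [g [gl [gb gx1]]] := hb_exists x1n0.
  have xp : 0 < `|x1| by rewrite normr_gt0.
  exists g; split => //.
    by move=> x; have := opn_ub xl xb x; rewrite A0 mul0r => h;
      apply: le_trans h _.
  move=> d d0; exists (`|x1|^-1 *: x1); split.
    by rewrite normrZ normfV normr_id mulVf ?gt_eqF.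
  by rewrite lfZ // gx1 mulVf ?gt_eqF //; lra.
have A0 := opn_ge0 xb; have A1 := opn_le1 xb.
have Ap' : 0 < opn xs by rewrite lt_neqAle eq_sym Ap.
exists (fun x => (opn xs)^-1 * xs x); split.
- by move=> k u v; rewrite xl mulrDr mulrCA.
- move=> x; rewrite normrM normfV (ger0_norm A0) ler_pdivrMl //.
  exact: opn_ub.
- move=> x; rewrite normrM normfV (ger0_norm A0) ler_pdivlMl // ler_piMl //.
- move=> d d0; have [x [x1' hx]] := opn_adh xl xb (opn xs * d) (mulr_gt0 Ap' d0).
  exists x; split => //; rewrite ler_pdivlMl // mulrBr mulr1; lra.
Qed.

Lemma C1 (p : \bar R) (M : R -> R -> R) (g : X -> R) (s : seq X) (x0 : X) (d eta : R) :
  (forall v : X * Y, psum_norm p v = M `|v.1| `|v.2|) ->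
  (forall a b, 0 <= a -> 0 <= b -> a <= M a b) ->
  weakly_octahedral_wrt (@psum_norm R X Y p) ->
  linear_functional g -> (forall x, `|g x| <= `|x|) ->
  `|x0| <= 1 -> 0 <= d <= 1 -> 1 - d <= g x0 -> 0 < eta -> eta <= 1 ->
  exists (u : X) (v : Y), M `|u| `|v| = 1 /\ forall x, span_seq s x ->
    exists y : X, `|y| <= 1 /\ (1 - eta) * (`|g x| + 2 - d) <= M `|y + x + u| `|v|.
Proof.
move=> hM Mge hS gl gb x01 /andP[d0 d1] gx0 e0 e1.
pose F (z : X * Y) := g z.1.
have Fl : linear_functional F by move=> k a b; rewrite /F fst_lin gl.
have Fb : forall z, `|F z| <= psum_norm p z.
  by move=> z; rewrite hM; apply: le_trans (gb _) (Mge _ _ _ _).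
pose s' := map (fun x : X => ((x, 0) : X * Y)) (x0 :: s).
have [[u v] [w1 hw]] := hS (span_seq s') (ex_intro _ _ erefl) F (conj Fl Fb) eta e0.
exists u, v; split; first by rewrite -w1 hM.
move=> x Sx; pose sg : R := if 0 <= g x then 1 else -1.
exists (sg *: x0); split.
  by rewrite normrZ /sg; case: ifP => _; rewrite ?normrN normr1 mul1r.
have Sz : span_seq s' ((sg *: x0 + x, 0) : X * Y).
  exact: (@ss_lin R X _ (fun x : X => ((x, 0) : X * Y)) _ _ (@inl_lin R X Y) (@ss_cons R X s x sg x0 Sx)).
have := hw _ Sz; rewrite w1 hM /= add0r => h.
apply: le_trans h; apply: ler_wpM2l; first by lra.
rewrite /F /= (lfD (sg *: x0) x gl) (lfZ sg x0 gl) /sg; case: ifP => gx.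
  have gxp : 0 <= g x by rewrite gx.
  have h0 : 0 <= g x0 + g x by lra.
  rewrite mul1r (ger0_norm gxp) (ger0_norm h0); lra.
have gn : g x < 0 by rewrite ltNge gx.
have h0 : -1 * g x0 + g x <= 0 by lra.
rewrite (ltr0_norm gn) (ler0_norm h0); lra.
Qed.
End PC.
Arguments C1 {R X Y p M g s x0 d eta}. Arguments C_norm {R X g s u eta kap}. Arguments C_g {R X xs}.


Section PC2.
Variable R : realType.
Variables X Y : normedModType R.

Lemma partC_inf : nontrivial X ->
  weakly_octahedral_wrt (@psum_norm R X Y +oo%E) -> weakly_octahedral X.
Proof.
move=> ntX hS; apply: woh_red => [v|E [s ->] xs xb eps e0 e1]; first exact: normr_ge0.
have [g [gl gb gxs gn]] := C_g ntX xb.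
pose th := eps / 12.
have th0 : 0 < th by rewrite divr_gt0.
have th1 : th <= 1 / 12 by rewrite ler_pM2r //; apply: ltW.
have [x0 [x01 gx0]] := gn th th0.
have hM : forall v : X * Y, psum_norm +oo%E v = Num.max `|v.1| `|v.2| by [].
have Mge : forall a b : R, 0 <= a -> 0 <= b -> a <= Num.max a b.
  by move=> a b _ _; rewrite le_max lexx.
have thd : 0 <= th <= 1 by apply/andP; split; lra.
have [u [v [w1 H]]] := C1 (s:=s) hM Mge hS gl gb x01 thd gx0 th0 ltac:(lra).
have u1 : `|u| <= 1 by rewrite -w1 le_max lexx.
have v1 : `|v| <= 1 by rewrite -w1 le_max lexx orbT.
have H2 : forall x, span_seq s x -> (1 - th) * (`|g x| + 1) - 2 * th <= `|x + u|.
  move=> x Sx; have [y [y1 hy]] := H x Sx.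
  have G0 := normr_ge0 (g x).
  have tt0 : 0 <= th * th by rewrite mulr_ge0 // ltW.
  have tg0 : 0 <= th * `|g x| by rewrite mulr_ge0 // ltW.
  have tg1 : th * `|g x| <= `|g x| by rewrite ler_piMl //; lra.
  have eK : (1 - th) * (`|g x| + 2 - th) = `|g x| - th * `|g x| + 2 - 3 * th + th * th.
    by ring.
  have eK1 : (1 - th) * (`|g x| + 1) = `|g x| - th * `|g x| + 1 - th by ring.
  rewrite eK1; move: hy; rewrite eK le_max => /orP[hy|hy]; last by lra.
  have t : `|y + x + u| <= `|y| + `|x + u| by rewrite -addrA ler_normD.
  lra.
have k0 : 0 <= 2 * th by lra.
have ek : 0 < 1 - th - 2 * th by lra.
have [w [wn Hw]] := C_norm gl u1 (ltW th0) k0 ek H2.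
exists w; split => // x Sx; rewrite wn.
have := Hw x Sx.
have ee : eps = 12 * th by rewrite /th; field.
have tg0 : 0 <= th * `|g x| by rewrite mulr_ge0 // ltW.
have tx0 : 0 <= th * `|xs x| by rewrite mulr_ge0 // ltW.
have ex : (1 - eps) * (`|xs x| + 1) = `|xs x| - 12 * (th * `|xs x|) + 1 - 12 * th.
  by rewrite ee; ring.
have eg : (1 - th) * (`|g x| + 1) = `|g x| - th * `|g x| + 1 - th by ring.
have gx := gxs x.
have m2 : 12 * (th * `|g x| - th * `|xs x|) <= `|g x| - `|xs x|.
  rewrite -mulrBr mulrA; apply: ler_piMl; lra.
rewrite ex eg; lra.
Qed.

Lemma bern (y : R) (n : nat) : 0 <= y <= 1 -> 1 - n%:R * (1 - y) <= y ^+ n.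
Proof.
move=> /andP[y0 y1]; elim: n => [|n IH]; first by rewrite mul0r subr0 expr0.
have yn1 : y ^+ n <= 1 by apply: exprn_ile1.
have h1 : (1 - y) * y ^+ n <= 1 - y by rewrite ler_piMr //; lra.
have e : y * y ^+ n = y ^+ n - (1 - y) * y ^+ n by ring.
rewrite exprS e -natr1; lra.
Qed.

Lemma partC_fin (r : R) : 1 < r -> nontrivial X ->
  weakly_octahedral_wrt (@psum_norm R X Y r%:E) -> weakly_octahedral X.
Proof.
move=> r1 ntX hS; have r0 : 0 < r by lra.
apply: woh_red => [v|E [s ->] xs xb eps e0 e1]; first exact: normr_ge0.
have [g [gl gb gxs gn]] := C_g ntX xb.
pose n := (Num.truncn r).+1.
have rn : r <= n%:R by apply: ltW; apply: truncnS_gt.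
have n0 : 0 < n%:R :> R by rewrite ltr0n.
pose c := 2 `^ (r - 1) - 1.
have c0 : 0 < c.
  rewrite /c subr_gt0.
  have := @gt0_ltr_powR _ (r - 1) ltac:(lra) 1 2; rewrite powR1; apply.
  - by rewrite nnegrE.
  - by rewrite nnegrE.
  - by rewrite ltr1n.
pose tau := eps / 4.
have tau0 : 0 < tau by rewrite divr_gt0.
have taur0 : 0 < tau `^ r by apply: powR_gt0.
have p2r : 0 < 2 `^ r :> R by apply: powR_gt0.
pose th := Num.min (eps / 12) (c * tau `^ r / (2 `^ r * (2 * n%:R))).
have th0 : 0 < th.
  rewrite lt_min divr_gt0 //= divr_gt0 ?mulr_gt0 //.
have the : th <= eps / 12 by rewrite ge_min lexx.
have thc : th <= c * tau `^ r / (2 `^ r * (2 * n%:R)) by rewrite ge_min lexx orbT.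
have th1 : th <= 1 / 12.
  by apply: le_trans the _; rewrite ler_pM2r //; apply: ltW.
have [x0 [x01 gx0]] := gn th th0.
have hM : forall v : X * Y, psum_norm r%:E v = nr r `|v.1| `|v.2| by [].
have Mge : forall a b : R, 0 <= a -> 0 <= b -> a <= nr r a b.
  by move=> a b a0 b0; apply: nr_gel.
have [A1 A2 A3 A4 A5] := L_th th0 th1.
have thd : 0 <= th <= 1 by rewrite (ltW th0) A5.
have [u [v [w1 H]]] := C1 (s:=s) hM Mge hS gl gb x01 thd gx0 th0 A5.
have u1 : `|u| <= 1 by rewrite -w1 nr_gel.
have uv : `|u| `^ r + `|v| `^ r = 1 by rewrite -nr_pow // w1 powR1.
have vt : `|v| <= tau.
  have [y0 [y01 hy0]] := H 0 (ss0 _).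
  rewrite lf0 // normr0 add0r addr0 in hy0.
  set K0 := (1 - th) * (2 - th) in hy0.
  have K0y : 2 * (1 - 2 * th) <= K0 := L_K0 (ltW th0).
  have y0' : 0 <= 1 - 2 * th <= 1 by rewrite (ltW A1) A2.
  have yr : 1 - n%:R * (1 - (1 - 2 * th)) <= (1 - 2 * th) `^ r.
    apply: le_trans (bern _ n y0') _; rewrite -powR_mulrn; last exact: ltW A1.
    by apply: ger_powR => //; rewrite A1 A2.
  have K0r : 2 `^ r * (1 - 2 * n%:R * th) <= K0 `^ r.
    apply: le_trans (_ : (2 * (1 - 2 * th)) `^ r <= _); last first.
      by apply: powR_le K0y; [apply: ltW | rewrite mulr_ge0 // ltW].
    rewrite powRM // ?(ltW A1) //; apply: ler_wpM2l; first exact: ltW.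
    suff -> : 1 - 2 * n%:R * th = 1 - n%:R * (1 - (1 - 2 * th)) by [].
    by ring.
  have K00 : 0 <= K0 by rewrite /K0 mulr_ge0 // ltW.
  have Kb : K0 `^ r <= `|y0 + u| `^ r + `|v| `^ r.
    by rewrite -nr_pow //; apply: powR_le hy0; [apply: ltW|].
  have a1 : `|y0 + u| `^ r <= 2 `^ (r - 1) * (1 + `|u| `^ r).
    apply: le_trans (_ : (1 + `|u|) `^ r <= _).
      apply: powR_le; [exact: ltW | exact: normr_ge0|].
      by apply: le_trans (ler_normD _ _) _; rewrite lerD2r.
    have := nr_conv r 1 `|u| r1 ler01 (normr_ge0 u); rewrite powR1.
    by [].
  have uv' : `|u| `^ r = 1 - `|v| `^ r by rewrite -uv addrK.
  rewrite uv' in a1.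
  have two : 2 `^ (r - 1) * 2 = 2 `^ r :> R by rewrite mulrC mulr_powRB1.
  have h5 : 2 `^ r * (2 * n%:R * th) <= (2 `^ (r - 1) - 1) * tau `^ r.
    move: thc; rewrite ler_pdivlMr ?mulr_gt0 //.
    suff -> : 2 `^ r * (2 * n%:R * th) = th * (2 `^ r * (2 * n%:R)) by [].
    by ring.
  have cv := L_cv K0r Kb a1 two h5.
  rewrite ler_pM2l // in cv.
  rewrite leNgt; apply/negP => tv.
  have := @gt0_ltr_powR _ r r0 tau `|v|; rewrite !nnegrE => /(_ (ltW tau0) (normr_ge0 v) tv).
  by rewrite ltNge cv.
have H2 : forall x, span_seq s x ->
    (1 - th) * (`|g x| + 1) - (2 * th + tau) <= `|x + u|.
  move=> x Sx; have [y [y1 hy]] := H x Sx.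
  have := nr_le_add r `|y + x + u| `|v| (ltW r1) (normr_ge0 _) (normr_ge0 _).
  have t : `|y + x + u| <= `|y| + `|x + u| by rewrite -addrA ler_normD.
  move=> hn; exact: L_H2 (ltW th0) y1 vt (le_trans hy hn) t.
have [k0 ek] := L_ek (ltW th0) th1 e0 e1.
have [w [wn Hw]] := C_norm gl u1 (ltW th0) k0 ek H2.
exists w; split => // x Sx; rewrite wn.
exact: L_fin (ltW th0) the erefl e1 (normr_ge0 _) (gxs x) (Hw x Sx).
Qed.
End PC2.


Theorem proposition4p5 (R : realType) (X Y : completeNormedModType R) :
  nontrivial X -> nontrivial Y ->
  [/\ (weakly_octahedral X ->
        weakly_octahedral_wrt (@psum_norm R X Y 1%:E)),
      (forall p : \bar R, (1%:E < p)%E ->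
        weakly_octahedral X -> weakly_octahedral Y ->
        weakly_octahedral_wrt (@psum_norm R X Y p)) &
      (forall p : \bar R, (1%:E < p)%E ->
        weakly_octahedral_wrt (@psum_norm R X Y p) -> weakly_octahedral X)].
Proof.
move=> ntX ntY; split.
- exact: partA.
- case => [r||] //; rewrite ?lte_fin => r1 hX hY.
    exact: partB_fin.
  exact: partB_inf.
- case => [r||] //; rewrite ?lte_fin => r1 hS.
    exact: partC_fin r1 ntX hS.
  exact: partC_inf ntX hS.
Qed.
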